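(* Assume (A9) of the context with constants $C_{\max}$ and $0<c<1$. Then for every $0<\epsilon<1-c$, with probability at least $1-\exp\big(-\frac{2n_q\epsilon^2}{C_{\max}^2}\big)$ over the sample $x_q^{(1)},\dots,x_q^{(n_q)}$, $$\sup_{x}\ \sup_{\delta\in\mathbb{R}^D:\|\delta\|\le\|\theta^*\|}\hat r(x;\theta^*+\delta)\le C'_{\mathrm{ratio}}:=\frac{C_{\max}}{1-c-\epsilon}<\infty.$$
   Context: $Q$ is a distribution on $\mathbb{R}^m$ with density $q$; $x_q^{(1)},\dots,x_q^{(n_q)}$ are i.i.d. from $Q$. $f:\mathbb{R}^m\to\mathbb{R}^D$ is a feature map; $r(x;\theta)=\exp(\theta^\top f(x))/N(\theta)$ with $N(\theta)=\mathbb{E}_{x\sim Q}[\exp(\theta^\top f(x))]$; $\hat N(\theta)=\frac1{n_q}\sum_i\exp(\theta^\top f(x_q^{(i)}))$; $\hat r(x;\theta)=\exp(\theta^\top f(x))/\hat N(\theta)$. $\theta^*\in\mathbb{R}^D$ is fixed; $\|\cdot\|$ is the Euclidean norm. (A9) For all $\delta$ with $\|\delta\|\le\|\theta^*\|$ and all $x$: $0<r(x;\theta^*+\delta)\le C_{\max}$; and $\mathbb{E}_{x\sim Q}\big[\inf_{\delta:\|\delta\|\le\|\theta^*\|}r(x;\theta^*+\delta)\big]\ge1-c$ for a constant $0<c<1$. *)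

(* Defs.v *)
From HB Require Import structures.
From mathcomp Require Import all_boot all_order all_algebra.
From mathcomp Require Import all_classical all_reals all_analysis.
Set Implicit Arguments. Unset Strict Implicit. Unset Printing Implicit Defensive.
Import Order.TTheory GRing.Theory Num.Theory.
Local Open Scope classical_set_scope.
Local Open Scope ring_scope.

(* R^m, as an alias of row vectors, equipped with a point so that it can carry
   a generated sigma-algebra. *)
Definition vecR (R : realType) (m : nat) := 'rV[R]_m.
HB.instance Definition _ (R : realType) (m : nat) := Choice.on (vecR R m).
HB.instance Definition _ (R : realType) (m : nat) := isPointed.Build (vecR R m) 0%R.

Section Defs.
Variable R : realType.

(* Generators of the Borel (product) sigma-algebra on R^m = 'rV[R]_m:
   preimages of Borel sets of R under the coordinate projections. *)
Definition coord_gen (m : nat) : set (set (vecR R m)) :=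
  [set A | exists (i : 'I_m) (B : set R), measurable B /\ A = (fun v : vecR R m => (v : 'rV[R]_m) ord0 i) @^-1` B].

Definition Rm (m : nat) : measurableType _ := g_sigma_algebraType (@coord_gen m).

Definition dotp (D : nat) (theta v : 'rV[R]_D) : R := \sum_(i < D) theta ord0 i * v ord0 i.

Definition enorm (D : nat) (v : 'rV[R]_D) : R := Num.sqrt (\sum_(i < D) v ord0 i ^+ 2).

Variables (m D : nat).

Definition Nfun (Q : probability (Rm m) R) (f : 'rV[R]_m -> 'rV[R]_D) (theta : 'rV[R]_D) : R :=
  fine (\int[Q]_x (expR (dotp theta (f x)))%:E)%E.

Definition rfun (Q : probability (Rm m) R) (f : 'rV[R]_m -> 'rV[R]_D) (theta : 'rV[R]_D)
  (x : 'rV[R]_m) : R := expR (dotp theta (f x)) / Nfun Q f theta.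

Definition Nhat (nq : nat) (xs : 'I_nq -> 'rV[R]_m) (f : 'rV[R]_m -> 'rV[R]_D) (theta : 'rV[R]_D) : R :=
  (\sum_(i < nq) expR (dotp theta (f (xs i)))) / nq%:R.

Definition rhat (nq : nat) (xs : 'I_nq -> 'rV[R]_m) (f : 'rV[R]_m -> 'rV[R]_D) (theta : 'rV[R]_D)
  (x : 'rV[R]_m) : R := expR (dotp theta (f x)) / Nhat xs f theta.

Definition assumption_A9 (Q : probability (Rm m) R) (f : 'rV[R]_m -> 'rV[R]_D)
  (theta_star : 'rV[R]_D) (Cmax c : R) : Prop :=
  (forall (delta : 'rV[R]_D) (x : 'rV[R]_m), enorm delta <= enorm theta_star ->
      0 < rfun Q f (theta_star + delta) x /\ rfun Q f (theta_star + delta) x <= Cmax) /\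
  ((1 - c)%:E <= \int[Q]_x
      (inf [set rfun Q f (theta_star + delta) x | delta in [set d | enorm d <= enorm theta_star]])%:E)%E.

End Defs.

Definition iid_sample (R : realType) (dO : measure_display) (Omega : measurableType dO)
  (P : probability Omega R) (m nq : nat) (Q : probability (Rm R m) R)
  (X : 'I_nq -> Omega -> Rm R m) : Prop :=
  (forall i, measurable_fun setT (X i)) /\
  (forall i (A : set (Rm R m)), measurable A -> P (X i @^-1` A) = Q A) /\
  (forall (S : {set 'I_nq}) (A : 'I_nq -> set (Rm R m)), (forall i, measurable (A i)) ->
     P (\bigcap_(i in [set j | j \in S]) (X i @^-1` A i)) = (\prod_(i in S) P (X i @^-1` A i))%E).

(* Main.v *)
Require Import Defs.
From HB Require Import structures.
From mathcomp Require Import all_boot all_order all_algebra.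
From mathcomp Require Import all_classical all_reals all_analysis.
From mathcomp Require Import ring lra.
Import Order.TTheory GRing.Theory Num.Theory.
Import numFieldNormedType.Exports.
Import HBNNSimple.
Local Open Scope classical_set_scope.
Local Open Scope ring_scope.

Set Implicit Arguments. Unset Strict Implicit.

Section range_sums.
Variables (R : realType) (d : measure_display) (T : measurableType d).
Variable (Q : probability T R).
Variable (h : {nnsfun T >-> R}).

Let fr : finite_set (range h) := fimfunP h.
Definition vs := finmap.enum_fset (fset_set (range h)).
Definition kk := size vs.
Definition vv (j : 'I_kk) : R := nth 0 vs j.

Lemma vs_uniq : uniq vs.
Proof. exact: finmap.fset_uniq. Qed.

Lemma mem_vs x : (x \in vs) = (x \in range h).
Proof. by rewrite -(in_fset_set fr). Qed.

Lemma vv_range j : range h (vv j).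
Proof. by have := mem_vs (vv j); rewrite mem_nth // => /esym/set_mem. Qed.

Lemma sum_range (F : R -> \bar R) : (forall x, F x \is a fin_num) ->
  (\sum_(x \in range h) F x)%E = (\sum_(j < kk) fine (F (vv j)))%:E.
Proof.
move=> Ff; rewrite (fsbig_finite _ _ fr).
rewrite (big_nth 0) big_mkord -sumEFin.
by apply: eq_bigr => j _; rewrite fineK.
Qed.

Definition qq (j : 'I_kk) : R := fine (Q (h @^-1` [set vv j])).

Lemma Q_fin (x : R) : Q (h @^-1` [set x]) \is a fin_num.
Proof.
apply: fin_num_measure; apply: measurable_funPTI; exact: measurable_set1.
Qed.

Lemma qq_ge0 j : 0 <= qq j.
Proof. by rewrite /qq fine_ge0. Qed.

Lemma sum_qq : \sum_(j < kk) qq j = 1.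
Proof.
apply: EFin_inj; rewrite /qq -(@sum_range (fun x => Q (h @^-1` [set x]))); last by move=> x; exact: Q_fin.
rewrite -(measure_fin_bigcup Q fr (@trivIset_preimage1 _ _ (range h) h)); last first.
  by move=> x _; apply: measurable_funPTI; exact: measurable_set1.
rewrite [X in _ X = _](_ : _ = setT); first exact: probability_setT.
by apply/seteqP; split => // y _; exists (h y) => //; exists y.
Qed.

Lemma sintegral_qq : sintegral Q h = (\sum_(j < kk) vv j * qq j)%:E.
Proof.
rewrite sintegralE sum_range; last by move=> x; rewrite fin_numM // Q_fin.
by congr (_ %:E); apply: eq_bigr => j _; rewrite /qq fineM // Q_fin.
Qed.

End range_sums.
Arguments vv {R d T} h j.
Arguments qq {R d T} Q h j.
Arguments kk {R d T} h.
Arguments vs {R d T} h.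

Lemma measure_bigsetU_le (R : realType) d (T : measurableType d) (mu : {measure set T -> \bar R})
  (I : Type) (s : seq I) (Pr : pred I) (F : I -> set T) :
  (forall i, measurable (F i)) ->
  (mu (\big[setU/set0]_(i <- s | Pr i) F i) <= \sum_(i <- s | Pr i) mu (F i))%E.
Proof.
move=> mF; elim: s => [|i s IH]; first by rewrite !big_nil measure0.
rewrite !big_cons; case: (Pr i) => //.
apply: le_trans (measureU2 _ (mF i) (bigsetU_measurable _ _)) _ => //.
by apply: leeD.
Qed.

Section chern.
Variables (R : realType) (m nq : nat) (dO : measure_display) (Omega : measurableType dO)
  (P : probability Omega R) (Q : probability (Rm R m) R) (X : 'I_nq -> Omega -> Rm R m).
Hypothesis hX : iid_sample P Q X.
Variable h : {nnsfun Rm R m >-> R}.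

Lemma Xpre_meas i (A : set (Rm R m)) : measurable A -> measurable (X i @^-1` A).
Proof.
move=> mA; case: hX => hm _; have := hm i measurableT A mA; by rewrite setTI.
Qed.

Definition St (t : {ffun 'I_nq -> 'I_(kk h)}) : set Omega :=
  \bigcap_(i in [set j | j \in setTfor 'I_nq]) (X i @^-1` (h @^-1` [set vv h (t i)])).

Lemma St_meas t : measurable (St t).
Proof.
apply: fin_bigcap_measurable; first exact: finite_finset.
move=> i _; apply: Xpre_meas; apply: measurable_funPTI; exact: measurable_set1.
Qed.

Lemma P_St t : P (St t) = (\prod_i qq Q h (t i))%:E.
Proof.
case: hX => _ [hd hi].
rewrite /St (hi (setTfor 'I_nq) (fun i => h @^-1` [set vv h (t i)])); last first.
  by move=> i; apply: measurable_funPTI; exact: measurable_set1.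
rewrite -prodEFin; apply: eq_big => [i|i _]; first exact: finset.in_setT.
rewrite hd; last by apply: measurable_funPTI; exact: measurable_set1.
by rewrite /qq fineK // Q_fin.
Qed.

Variable thr : R.
Definition badb (t : {ffun 'I_nq -> 'I_(kk h)}) := \sum_i vv h (t i) < nq%:R * thr.
Definition Bad : set Omega := \big[setU/set0]_(t | badb t) St t.

Lemma Bad_meas : measurable Bad.
Proof. by apply: bigsetU_measurable => t _; exact: St_meas. Qed.

Lemma P_Bad : (P Bad <= (\sum_(t | badb t) \prod_i qq Q h (t i))%:E)%E.
Proof.
apply: le_trans (@measure_bigsetU_le _ _ _ P _ _ _ St St_meas) _.
rewrite -sumEFin le_eqVlt; apply/orP; left; apply/eqP; apply: eq_bigr => t _.
exact: P_St.
Qed.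

Lemma notBad w : ~ Bad w -> nq%:R * thr <= \sum_i h (X i w).
Proof.
move=> nB; rewrite leNgt; apply/negP => hlt; apply: nB.
have hin i : (index (h (X i w)) (vs h) < kk h)%N.
  by rewrite /kk index_mem mem_vs inE; exists (X i w).
pose t := [ffun i => Ordinal (hin i)].
have vt i : vv h (t i) = h (X i w) by rewrite /vv ffunE /= nth_index // mem_vs inE; exists (X i w).
have bt : badb t by rewrite /badb (eq_bigr _ (fun i _ => vt i)).
rewrite /Bad (big_rem t) ?mem_index_enum // bt; left.
by move=> i _ /=; rewrite /preimage /= vt.
Qed.

End chern.

Unset Implicit Arguments. Set Strict Implicit.
Section calc.
Variable R : realType.

Lemma nincr_helper (F F' : R -> R) (a b : R) :
  (forall x : R, is_derive x 1 F (F' x)) -> (forall x, a < x < b -> F' x <= 0) ->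
  a <= b -> F b <= F a.
Proof.
move=> dF F'le ab.
have dv : forall x : R, derivable F x 1 by move=> x; case: (dF x).
apply: (@ler0_derive1_nincr R F a b) => //.
- move=> x; rewrite in_itv /= => /andP[ax xb].
  by rewrite derive1E derive_val; apply: F'le; rewrite ax xb.
- by apply: derivable_within_continuous => x _; exact: dv.
Qed.

Lemma hoeffding_lemma (p u : R) : 0 <= p -> p <= 1 -> 0 <= u ->
  expR (p * u) * (1 - p + p * expR (- u)) <= expR (u ^+ 2 / 8).
Proof.
move=> p0 p1 u0.
pose B y := p + (1 - p) * expR y.
have Bpos y : 0 < B y.
  rewrite /B; have [->|pn0] := eqVneq p 0.
    by rewrite subr0 mul1r add0r expR_gt0.
  have : 0 < p by rewrite lt_def pn0 p0.
  have : 0 <= (1 - p) * expR y by rewrite mulr_ge0 ?subr_ge0 ?expR_ge0.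
  lra.
pose K y := p - y / 4 - p * (B y)^-1.
have dB (x : R) : is_derive x 1 B ((1 - p) * expR x).
  apply: is_derive_eq; rewrite /GRing.scale /=; ring.
have dK (x : R) : is_derive x 1 K (- 1/4 + p * (1 - p) * expR x / (B x) ^+ 2).
  have hV := is_deriveV (lt0r_neq0 (Bpos x)) (dB x).
  rewrite /K; apply: is_derive_eq.
  rewrite /GRing.scale /=.
  have := lt0r_neq0 (Bpos x); move: (B x) => b bn0.
  by field.
pose G y := ln (B y) - y + p * y - y ^+ 2 / 8.
have dG (x : R) : is_derive x 1 G (K x).
  have hl := is_derive1_ln (Bpos x).
  have hc := is_derive1_comp hl (dB x).
  rewrite /G; apply: is_derive_eq.
  have := lt0r_neq0 (Bpos x).
  rewrite /K /B /GRing.scale /=; move: (expR x) => e hb.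
  by field.
have Kle0 : forall x, 0 <= x -> K x <= 0.
  move=> x x0; have -> : 0 = K 0.
    rewrite /K /B expR0; have -> : p + (1 - p) * 1 = 1 by ring.
    by rewrite invr1; ring.
  apply: (@nincr_helper K (fun y => -1/4 + p*(1-p)*expR y / B y ^+ 2) 0 x dK) => // y /andP[y0 _].
  have := Bpos y; rewrite /B; move: (expR_gt0 y) => ep.
  move: (expR y) ep => e ep Bp.
  have -> : -1 / 4 + p * (1 - p) * e / (p + (1 - p) * e) ^+ 2
     = - ((p - (1 - p) * e) ^+ 2 / (4 * (p + (1 - p) * e) ^+ 2)).
    by field; exact: lt0r_neq0.
  by rewrite oppr_le0 divr_ge0 ?sqr_ge0 // mulr_ge0 // sqr_ge0.
have Gle : G u <= G 0.
  apply: (@nincr_helper G K 0 u dG) => // y /andP[y0 _]; apply: Kle0; exact: ltW.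
have G0 : G 0 = 0.
  rewrite /G /B expR0; have -> : p + (1 - p) * 1 = 1 by ring.
  by rewrite ln1 expr0n /=; ring.
rewrite G0 /G in Gle.
have -> : 1 - p + p * expR (- u) = expR (- u) * B u.
  rewrite /B expRN; have := lt0r_neq0 (expR_gt0 u); move: (expR u) => e en0.
  by field.
rewrite mulrA -expRD -[B u]lnK ?posrE // -expRD ler_expR.
lra.
Qed.
Lemma expR_chord (s C y : R) : 0 < C -> 0 <= y -> y <= C ->
  expR (- (s * y)) <= 1 - y / C + y / C * expR (- (s * C)).
Proof.
move=> C0 y0 yC.
have t0 : 0 <= y / C by rewrite divr_ge0 // ltW.
have t1 : y / C <= 1 by rewrite ler_pdivrMr // mul1r.
have := @convex_expR R (Itv01 t0 t1) (- (s * C)) 0.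
rewrite !convRE /=.
rewrite /unstable.onem expR0 mulr0 addr0 mulr1.
have -> : y / C * - (s * C) = - (s * y).
  by field; exact: lt0r_neq0.
lra.
Qed.

Lemma chern_real (nq k : nat) (q v : 'I_k -> R) (thr s C : R) :
  (forall j, 0 <= q j) -> \sum_j q j = 1 -> (forall j, 0 <= v j <= C) ->
  0 <= s -> 0 < C ->
  \sum_(t : {ffun 'I_nq -> 'I_k} | \sum_i v (t i) < nq%:R * thr) \prod_i q (t i)
  <= expR (nq%:R * (s * (thr - \sum_j v j * q j) + (s * C) ^+ 2 / 8)).
Proof.
move=> q0 q1 vC s0 C0.
set mu := \sum_j v j * q j.
pose G (j : 'I_k) := q j * expR (s * (thr - v j)).
have step1 : \sum_(t : {ffun 'I_nq -> 'I_k} | \sum_i v (t i) < nq%:R * thr) \prod_i q (t i)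
    <= \sum_(t : {ffun 'I_nq -> 'I_k}) \prod_i G (t i).
  rewrite big_mkcond /=; apply: ler_sum => t _.
  have -> : \prod_i G (t i) = \prod_i q (t i) * expR (s * (nq%:R * thr - \sum_i v (t i))).
    rewrite /G big_split /=; congr (_ * _).
    rewrite -expR_sum; congr expR.
    rewrite (eq_bigr (fun i => s * thr - s * v (t i))); last by move=> i _; rewrite mulrBr.
    by rewrite sumrB sumr_const card_ord -mulr_natl -mulr_sumr; ring.
  case: ifP => bt.
  - rewrite ler_peMr ?prodr_ge0 //.
    have : 0 <= s * (nq%:R * thr - \sum_i v (t i)) by rewrite mulr_ge0 // subr_ge0 ltW.
    move=> hh; apply: le_trans (expR_ge1Dx _); lra.
  - by rewrite mulr_ge0 ?prodr_ge0 ?expR_ge0.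
apply: le_trans step1 _.
rewrite -(bigA_distr_bigA (fun (i : 'I_nq) j => G j)) /= prodr_const card_ord.
rewrite expRM_natl; apply: lerXn2r; rewrite ?nnegrE ?expR_ge0 //.
  by apply: sumr_ge0 => j _; rewrite /G mulr_ge0 ?expR_ge0.
set E := expR (- (s * C)).
have mu0 : 0 <= mu by rewrite sumr_ge0 // => j _; rewrite mulr_ge0 //; case/andP: (vC j).
have muC : mu <= C.
  apply: le_trans (_ : \sum_j C * q j <= _).
    by apply: ler_sum => j _; rewrite ler_wpM2r //; case/andP: (vC j).
  by rewrite -mulr_sumr q1 mulr1.
have hS : \sum_j G j <= expR (s * thr) * (1 + mu * ((E - 1) / C)).
  have -> : \sum_j G j = expR (s * thr) * \sum_j q j * expR (- (s * v j)).
    rewrite mulr_sumr; apply: eq_bigr => j _.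
    by rewrite /G mulrBr expRD mulrCA.
  rewrite ler_pM2l ?expR_gt0 //.
  apply: le_trans (_ : \sum_j (q j + v j * q j * ((E - 1) / C)) <= _); last first.
    by rewrite big_split /= q1 -mulr_suml.
  apply: ler_sum => j _; case/andP: (vC j) => v0 vC'.
  have := @expR_chord s C (v j) C0 v0 vC'; rewrite -/E => hc.
  have -> : q j + v j * q j * ((E - 1) / C) = q j * (1 - v j / C + v j / C * E).
    by field; exact: lt0r_neq0.
  by rewrite ler_wpM2l.
apply: le_trans hS _.
have p0 : 0 <= mu / C by rewrite divr_ge0 // ltW.
have p1 : mu / C <= 1 by rewrite ler_pdivrMr // mul1r.
have hs0 : 0 <= s * C by rewrite mulr_ge0 // ltW.
have := @hoeffding_lemma (mu / C) (s * C) p0 p1 hs0; rewrite -/E.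
have -> : mu / C * (s * C) = s * mu by field; exact: lt0r_neq0.
have -> : 1 - mu / C + mu / C * E = 1 + mu * ((E - 1) / C) by field; exact: lt0r_neq0.
move=> hh.
rewrite mulrBr !expRD -mulrA ler_pM2l ?expR_gt0 //.
rewrite [X in X <= _](_ : _ = expR (- (s * mu)) * (expR (s * mu) * (1 + mu * ((E - 1) / C)))); last first.
  by rewrite [RHS]mulrA (mulrC (expR (- _))) expRxMexpNx_1 mul1r.
rewrite ler_pM2l ?expR_gt0 //; apply: le_trans hh _.

Qed.
End calc.

Lemma chern_h (R : realType) (m nq : nat) (dO : measure_display) (Omega : measurableType dO)
  (P : probability Omega R) (Q : probability (Rm R m) R) (X : 'I_nq -> Omega -> Rm R m)
  (hX : iid_sample P Q X) (h : {nnsfun Rm R m >-> R}) (thr C s : R) :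
  0 < C -> (forall x, h x <= C) -> 0 <= s ->
  exists E : set Omega, measurable E /\
    ((1 - expR (nq%:R * (s * (thr - fine (sintegral Q h)) + (s * C) ^+ 2 / 8)))%:E <= P E)%E /\
    (forall w, E w -> nq%:R * thr <= \sum_i h (X i w)).
Proof.
move=> C0 hC s0.
exists (~` Bad X h thr); split; first exact/measurableC/(Bad_meas hX).
split; last by move=> w; exact: notBad.
rewrite probability_setC; last exact: (Bad_meas hX).
rewrite EFinB; apply: leeB => //.
apply: le_trans (P_Bad hX h thr) _; rewrite lee_fin /badb.
rewrite sintegral_qq /=.
apply: chern_real => //.
- exact: qq_ge0.
- exact: sum_qq.
- move=> j; have [x _ <-] := vv_range j; by rewrite fun_ge0 hC.
Qed.

Lemma limit_helper (R : realType) (a b L : R) : 0 < b -> 0 <= L ->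
  (forall k : nat, a <= b * expR (L / k.+1%:R)) -> a <= b.
Proof.
move=> b0 L0 H; rewrite leNgt; apply/negP => ba.
have r1 : 1 < a / b by rewrite ltr_pdivlMr // mul1r.
have lr : 0 < ln (a / b) by rewrite ln_gt0.
pose k := Num.Def.archi_bound (L / ln (a / b)).
have hk : L / ln (a / b) < k%:R by apply: archi_boundP; rewrite divr_ge0 // ltW.
have hk1 : L / k.+1%:R < ln (a / b).
  rewrite ltr_pdivrMr ?ltr0Sn // -ltr_pdivrMl //.
  rewrite mulrC; apply: (lt_le_trans hk); rewrite ler_nat; exact: leqnSn.
have := H k; rewrite leNgt => /negP; apply.
have : expR (L / k.+1%:R) < a / b.
  by rewrite -[X in _ < X]lnK ?ltr_expR // posrE divr_gt0 // (lt_trans b0).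
by rewrite ltr_pdivlMr // mulrC.
Qed.

Lemma rhat_alg (R : realType) (n : nat) (a N C thr : R) (b : 'I_n -> R) :
  (0 < n)%N -> 0 < N -> 0 < thr -> 0 < a -> a / N <= C ->
  n%:R * thr <= \sum_i b i / N -> a / ((\sum_i b i) / n%:R) <= C / thr.
Proof.
move=> n0 N0 t0 a0 aC hb.
have C0 : 0 <= C by apply: le_trans aC; rewrite divr_ge0 // ltW.
rewrite -mulr_suml ler_pdivlMr // in hb.
rewrite ler_pdivrMr // in aC.
have nR : 0 < n%:R :> R by rewrite ltr0n.
have Sb : 0 < \sum_i b i.
  by apply: lt_le_trans hb; rewrite mulr_gt0 // mulr_gt0.
rewrite invf_div mulrA ler_pdivrMr // mulrAC ler_pdivlMr //.
apply: le_trans (_ : C * N * n%:R * thr <= _).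
  by apply: ler_wpM2r; [exact: ltW | apply: ler_wpM2r; [exact: ltW|]].
have -> : C * N * n%:R * thr = C * (n%:R * thr * N) by ring.
exact: ler_wpM2l.
Qed.

Theorem proposition9 (R : realType) (m D nq : nat)
  (Q : probability (Rm R m) R) (f : 'rV[R]_m -> 'rV[R]_D)
  (f_meas : forall j : 'I_D, measurable_fun setT (fun x : Rm R m => f x ord0 j))
  (theta_star : 'rV[R]_D) (Cmax c : R)
  (hc0 : 0 < c) (hc1 : c < 1)
  (hA9 : assumption_A9 Q f theta_star Cmax c)
  (hnq : (0 < nq)%N)
  (dO : measure_display) (Omega : measurableType dO) (P : probability Omega R)
  (X : 'I_nq -> Omega -> Rm R m)
  (hX : iid_sample P Q X)
  (eps : R) (heps0 : 0 < eps) (heps1 : eps < 1 - c) :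
  exists E : set Omega, measurable E /\
    ((1 - expR (- (2 * nq%:R * eps ^+ 2) / Cmax ^+ 2))%:E <= P E)%E /\
    (forall w, E w ->
       forall (x : 'rV[R]_m) (delta : 'rV[R]_D), enorm delta <= enorm theta_star ->
         rhat (fun i => X i w) f (theta_star + delta) x <= Cmax / (1 - c - eps)).
Proof.
case: hA9 => hpos hint.
pose S x := [set rfun Q f (theta_star + delta) x | delta in [set d | enorm d <= enorm theta_star]].
pose g x := inf (S x).
have en0 : enorm (0 : 'rV[R]_D) <= enorm theta_star.
  rewrite /enorm (eq_bigr (fun _ => 0)); last by move=> i _; rewrite mxE expr0n.
  by rewrite big1_eq sqrtr0 sqrtr_ge0.
have lbS x : has_lbound (S x).
  by exists 0 => y [d hd <-]; exact: ltW (hpos d x hd).1.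
have gle x d : enorm d <= enorm theta_star -> g x <= rfun Q f (theta_star + d) x.
  by move=> hd; apply: (ge_inf (lbS x)); exists d.
have g0 x : 0 <= g x.
  apply: lb_le_inf; first by exists (rfun Q f (theta_star + 0) x); exists 0.
  by move=> y [d hd <-]; exact: ltW (hpos d x hd).1.
have gC x : g x <= Cmax := le_trans (gle x 0 en0) (hpos 0 x en0).2.
have C0 : 0 < Cmax := lt_le_trans (hpos 0 0 en0).1 (hpos 0 0 en0).2.
have hint' : ((1 - c)%:E <= \int[Q]_x (g x)%:E)%E := hint.
rewrite ge0_integralTE in hint'; last by move=> x; rewrite lee_fin g0.
have exh (k : nat) : exists h : {nnsfun Rm R m >-> R},
    (forall x, h x <= g x) /\ ((1 - c - k.+1%:R^-1)%:E < sintegral Q h)%E.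
  have : ((1 - c - k.+1%:R^-1)%:E < (1 - c)%:E)%E.
    by rewrite lte_fin gtrDl oppr_lt0 invr_gt0 ltr0Sn.
  move=> /lt_le_trans /(_ hint') /ereal_sup_gt [y [h hh <-] hy].
  by exists h; split => // x; have := hh x; rewrite lee_fin.
have [H HH] := choice exh.
pose s := 4 * eps / Cmax ^+ 2.
pose thr := 1 - c - eps.
have s0 : 0 <= s by rewrite /s divr_ge0 ?sqr_ge0 // mulr_ge0 // ltW.
have exE (k : nat) := @chern_h _ _ _ _ _ P Q X hX (H k) thr Cmax s C0 (fun x => le_trans ((HH k).1 x) (gC x)) s0.
have [Ek HE] := choice exE.
exists (\bigcup_k Ek k); split; first by apply: bigcupT_measurable => k; exact: (HE k).1.
split; last first.
  move=> w [k _ Ew] x delta hd.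
  have hs := (HE k).2.2 w Ew.
  have hs2 : nq%:R * thr <= \sum_i rfun Q f (theta_star + delta) (X i w).
    apply: le_trans hs _; apply: ler_sum => i _.
    exact: le_trans ((HH k).1 _) (gle _ _ hd).
  have [rp rC] := hpos delta x hd.
  have Npos : 0 < Nfun Q f (theta_star + delta).
    by move: rp; rewrite /rfun pmulr_rgt0 ?expR_gt0 // invr_gt0.
  rewrite /rhat /Nhat.
  apply: (@rhat_alg _ nq _ (Nfun Q f (theta_star + delta))) => //.
  - by rewrite subr_gt0.
  - exact: expR_gt0.
set U := \bigcup_k Ek k.
have mU : measurable U by apply: bigcupT_measurable => i; exact: (HE i).1.
have Ufin : P U \is a fin_num by apply: fin_num_measure.
rewrite -(fineK Ufin) lee_fin.
set b := expR (- (2 * nq%:R * eps ^+ 2) / Cmax ^+ 2).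
suff : 1 - fine (P U) <= b by lra.
apply: (@limit_helper _ _ b (nq%:R * s)); first exact: expR_gt0.
  by rewrite mulr_ge0.
move=> k0.
move: k0 => k.
have [mEk [hPk _]] := HE k.
have PkU : (P (Ek k) <= P U)%E.
  by apply: le_measure; rewrite ?inE // => w Ew; exists k.
have hmu := (HH k).2.
have hsf := sintegral_qq Q (H k).
rewrite hsf lte_fin in hmu; rewrite hsf /= in hPk.
have hPk2 := le_trans hPk PkU.
rewrite -(fineK Ufin) lee_fin in hPk2.
set mu := \sum_j _ in hmu hPk2.
suff : expR (nq%:R * (s * (thr - mu) + (s * Cmax) ^+ 2 / 8)) <= b * expR (nq%:R * s / k.+1%:R).
  by lra.
rewrite /b -expRD ler_expR.
have e : - (2 * nq%:R * eps ^+ 2) / Cmax ^+ 2 = nq%:R * (- (s * eps) + (s * Cmax) ^+ 2 / 8).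
  by rewrite /s; field; exact: lt0r_neq0.
rewrite e.
clearbody mu.
have h1 : s * (thr - mu) <= s * (k.+1%:R^-1 - eps).
  apply: ler_wpM2l => //; rewrite /thr; move: hmu; move: (k.+1%:R^-1) => z hz; lra.
apply: (le_trans (y := nq%:R * (s * (k.+1%:R^-1 - eps) + (s * Cmax) ^+ 2 / 8))).
  by apply: ler_wpM2l => //; rewrite lerD2r.
rewrite le_eqVlt; apply/orP; left; apply/eqP; ring.
Qed.
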